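(* Let $g(x)=\sin(x)^2$ and for positive integers $m,n$ let $\tilde{G}(m,n)=\frac{1}{\pi}\int_{-\pi/2}^{\pi/2}\prod_{i=0}^{n-1} g(x+mi\pi/n)\,dx$. Then $\tilde{G}(1,n)=\frac{2}{4^n}$ for every positive integer $n$, and $\tilde G(m,n)\ge\tilde G(1,n)$ for all positive integers $m,n$. *)

(* Defs.v *)
From Stdlib Require Import Reals Lra Lia.
From Coquelicot Require Import Coquelicot.
Open Scope R_scope.

Definition g (x : R) : R := (sin x) ^ 2.

Fixpoint prod_upto (n : nat) (f : nat -> R) : R :=
  match n with
  | O => 1
  | S k => prod_upto k f * f k
  end.

Definition Gt (m n : nat) : R :=
  / PI * RInt (fun x => prod_upto n (fun i => g (x + INR m * INR i * PI / INR n)))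
              (- (PI / 2)) (PI / 2).

(* Main.v *)
Set Warnings "-notation-overridden,-ambiguous-paths".
Require Import Defs.
From Stdlib Require Import Reals Lra Lia.
From Coquelicot Require Import Coquelicot.
From HB Require Import structures.
From mathcomp Require Import all_boot all_algebra.
From mathcomp Require Import Rstruct complex.
Import GRing.Theory Num.Theory.
Open Scope R_scope.

Section Cx.
Local Open Scope ring_scope.
Local Open Scope complex_scope.
Definition ce (t : R) : R[i] := (cos t) +i* (sin t).
Lemma ceD a b : ce a * ce b = ce (a + b).
Proof.
rewrite /ce; apply/eqP; rewrite eq_complex /=; apply/andP; split; apply/eqP.
  by rewrite cosD.
by rewrite sinD addrC.
Qed.
Lemma ce0 : ce 0 = 1.
Proof. by rewrite /ce cos_0 sin_0. Qed.
Lemma ceX t k : ce t ^+ k = ce (INR k * t).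
Proof.
elim: k => [|k IH]; first by rewrite expr0 Rmult_0_l ce0.
rewrite exprS IH ceD; congr ce; rewrite S_INR; ring.
Qed.

Definition nc (c : R[i]) : R := let: a +i* b := c in Rplus (Rmult a a) (Rmult b b).
Lemma ncM a b : nc (a * b) = nc a * nc b.
Proof.
case: a => a1 a2; case: b => b1 b2; rewrite /nc /=.
rewrite -!RmultE -!RminusE -!RplusE. ring.
Qed.
Lemma nc1 : nc 1 = 1.
Proof. by rewrite /nc /= Rmult_1_l Rmult_0_l Rplus_0_r. Qed.
Lemma ncX c k : nc (c ^+ k) = nc c ^+ k.
Proof. elim: k => [|k IH]; first by rewrite !expr0 nc1. by rewrite !exprS ncM IH. Qed.
Lemma nc_prod n (F : 'I_n -> R[i]) : nc (\prod_(i < n) F i) = \prod_(i < n) nc (F i).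
Proof. exact: (big_morph nc ncM nc1). Qed.
Lemma nc_ce a b : nc (ce a - ce b) = Rmult 4 (Rsqr (sin ((a - b) / 2))).
Proof.
rewrite /nc /ce /=. rewrite -!RminusE form2 form4.
have h := sin2_cos2 ((a+b)/2). rewrite /Rsqr in h *. nra.
Qed.
End Cx.

Lemma prim_z n : (0 < n)%N -> primitive_root_of_unity n (ce (2 * PI / INR n)).
Proof.
move=> n0; apply/andP; split => //; apply/forallP => i; rewrite unity_rootE ceX.
have nR : (0 < INR n) by apply: lt_0_INR; apply/ltP.
case: (eqVneq i.+1 n) => [e|ne].
  rewrite e eqb_id; apply/eqP.
  have -> : (INR n * (2 * PI / INR n) = 2 * PI) by field; lra.
  by rewrite /ce cos_2PI sin_2PI.
rewrite eqbF_neg; apply/negP => /eqP/(congr1 (@complex.Re _)) /=.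
have lt : (i.+1 < n)%N by rewrite ltn_neqAle ne ltn_ord.
have ltR : (INR i.+1 < INR n) by apply: lt_INR; apply/ltP.
have iR : (0 < INR i.+1) by apply: lt_0_INR; apply/ltP.
set t := (PI * INR i.+1 / INR n).
have -> : (INR i.+1 * (2 * PI / INR n) = 2 * t) by rewrite /t; field; lra.
have t0 : (0 < t) by rewrite /t; apply: Rdiv_lt_0_compat => //; apply: Rmult_lt_0_compat => //; exact: PI_RGT_0.
have tP : (t < PI).
  rewrite /t; apply/Rlt_div_l => //. have := PI_RGT_0. nra.
have st := sin_gt_0 t t0 tP.
rewrite cos_2a_sin => h. change (1 - 2 * sin t * sin t = 1) in h. nra.
Qed.


Section Cx2.
Local Open Scope ring_scope.
Lemma prod_root (n m : nat) (x : R) : (0 < n)%N ->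
  \prod_(i < n) (ce (-2 * x) - ce (2 * PI / INR n) ^+ (m * i))
  = (ce (-2 * x) ^+ (n %/ gcdn m n)%N - 1) ^+ (gcdn m n).
Proof.
move=> n0.
set z := ce (2 * PI / INR n). set w := ce (-2 * x).
set d := gcdn m n. set n' := (n %/ d)%N.
have pz := prim_z n n0.
have pzeta : n'.-primitive_root (z ^+ m) by exact: exp_prim_root.
have f := factor_Xn_sub_1 pzeta.
have fw := congr1 (horner^~ w) f.
rewrite /= horner_prod !hornerE in fw.
have Hk : forall k, \prod_(0 <= i < n' * k) (w - (z ^+ m) ^+ i) = (w ^+ n' - 1) ^+ k.
  elim => [|k IH]; first by rewrite muln0 big_geq // expr0.
  rewrite mulnSr (@big_cat_nat _ _ _ (n' * k)%N) /= ?IH ?leq_addr //.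
  rewrite -{1}(add0n (n' * k)%N) big_addn addKn exprSr; congr (_ * _).
  rewrite -fw; apply: eq_bigr => i _; rewrite !hornerE exprD exprM.
  by rewrite (prim_expr_order pzeta) expr1n mulr1.
have nE : n = (n' * d)%N by rewrite /n' divnK // dvdn_gcdr.
rewrite -Hk -nE big_mkord; apply: eq_bigr => i _; by rewrite exprM.
Qed.
End Cx2.

Lemma prod_uptoE n f : prod_upto n f = (\prod_(i < n) f i)%R.
Proof. elim: n => [|n IH] /=; first by rewrite big_ord0. by rewrite big_ord_recr /= IH. Qed.

Lemma four_g n m x i : (0 < n)%N ->
  4 * g (x + INR m * INR i * PI / INR n) =
  nc (GRing.add (ce (-2 * x)) (GRing.opp (GRing.exp (ce (2 * PI / INR n)) (m * i)%N))).
Proof.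
move=> n0. have nR : INR n <> 0 by apply: not_0_INR => e; rewrite e in n0.
rewrite ceX nc_ce mult_INR.
have -> : ((-2 * x - INR m * INR i * (2 * PI / INR n)) / 2 = -(x + INR m * INR i * PI / INR n)) by field.
rewrite sin_neg /g /Rsqr. ring.
Qed.


Lemma prod_g n m x : (0 < n)%N ->
  prod_upto n (fun i => g (x + INR m * INR i * PI / INR n)) =
  (4 * g (INR (n %/ gcdn m n) * x)) ^ (gcdn m n) / 4 ^ n.
Proof.
move=> n0.
have key : (4 ^ n * prod_upto n (fun i => g (x + INR m * INR i * PI / INR n)) =
  (4 * g (INR (n %/ gcdn m n) * x)) ^ (gcdn m n)).
  rewrite prod_uptoE RpowE.
  have -> : forall a : R, (@GRing.exp R a n = \prod_(i < n) a)%R by move=> a; rewrite prodr_const cardT size_enum_ord.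
  rewrite -big_split /=.
  rewrite (eq_bigr (fun i : 'I_n => nc (GRing.add (ce (-2 * x)) (GRing.opp (GRing.exp (ce (2 * PI / INR n)) (m * i)%N))))); last first.
    by move=> i _; rewrite -four_g.
  rewrite -nc_prod prod_root // ncX -ce0 ceX nc_ce RpowE. congr (GRing.exp _ _).
  rewrite /g /Rsqr. have -> : ((INR (n %/ gcdn m n) * (-2 * x) - 0) / 2 = - (INR (n %/ gcdn m n) * x)) by field.
  rewrite sin_neg. match goal with |- ?a = ?b => change (@eq R a b) end. ring.
rewrite -key. field. apply: pow_nonzero. lra.
Qed.

Ltac fixeq := match goal with |- ?a = ?b => change (@eq R a b) end.

Lemma sin_kPI k : sin (INR k * PI) = 0.
Proof.
elim: k => [|k IH]; first by rewrite Rmult_0_l sin_0.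
rewrite S_INR Rmult_plus_distr_r Rmult_1_l neg_sin IH; lra.
Qed.

Lemma int_lin a c k : (0 < k)%N ->
  RInt (fun x => a * (1 - c * cos (2 * INR k * x))) (-(PI/2)) (PI/2) = a * PI.
Proof.
move=> k0. have kR : 0 < INR k by apply: lt_0_INR; apply/ltP.
have e1 : 2 * INR k * (PI / 2) = INR k * PI by field.
have e2 : 2 * INR k * (- (PI / 2)) = - (INR k * PI) by rewrite -Ropp_mult_distr_r e1.
apply: is_RInt_unique.
set F := fun x => a * (x - c * sin (2 * INR k * x) / (2 * INR k)).
have -> : a * PI = F (PI/2) - F (-(PI/2)).
  rewrite /F e1 e2 sin_neg sin_kPI. field. lra.
apply: (is_RInt_derive F) => x _.
  rewrite /F. auto_derive; first by [].
  field. lra.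
apply: ex_derive_continuous. auto_derive. by [].
Qed.

Lemma bern t d : 0 <= t -> 1 + INR d * (t - 1) <= t ^ d.
Proof.
move=> t0. elim: d => [|d IH]; first by rewrite /=; lra.
rewrite S_INR /=. have dp := pos_INR d.
have h1 : t * (1 + INR d * (t - 1)) <= t * t ^ d by apply: Rmult_le_compat_l.
have h2 : 0 <= INR d * ((t - 1) * (t - 1)) by apply: Rmult_le_pos => //; apply: Rle_0_sqr.
nra.
Qed.

Lemma g_cos y : g y = (1 - cos (2 * y)) / 2.
Proof. rewrite /g cos_2a_sin. field. Qed.

Lemma part1 n : (0 < n)%N -> Gt 1 n = 2 / 4 ^ n.
Proof.
move=> n0. have pn : 0 < 4 ^ n by apply: pow_lt; lra.
rewrite /Gt (RInt_ext _ (fun x => (2 / 4 ^ n) * (1 - 1 * cos (2 * INR n * x)))).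
  rewrite int_lin //. have := PI_RGT_0. move=> ?. fixeq. change (RinvImpl.Rinv PI) with (Rinv PI). field. lra.
move=> x _. rewrite prod_g // gcd1n divn1 pow_1 g_cos. fixeq. replace (2 * INR n * x) with (2 * (INR n * x)) by ring. field. lra.
Qed.

Lemma part2 m n : (0 < m)%N -> (0 < n)%N -> Gt m n >= Gt 1 n.
Proof.
move=> m0 n0. rewrite part1 //.
set d := gcdn m n. set n' := (n %/ d)%N.
have d0 : (0 < d)%N by rewrite /d gcdn_gt0 m0.
have n'0 : (0 < n')%N by rewrite /n' divn_gt0 // dvdn_leq // dvdn_gcdr.
have pn : 0 < 4 ^ n by apply: pow_lt; lra.
have piP := PI_RGT_0.
set f := fun x => (4 * g (INR n' * x)) ^ d / 4 ^ n.
set L := fun x => (2 ^ d / 4 ^ n) * (1 - INR d * cos (2 * INR n' * x)).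
have eG : Gt m n = / PI * RInt f (-(PI/2)) (PI/2).
  rewrite /Gt; congr (_ * _); apply: RInt_ext => x _. by rewrite prod_g.
have eL : RInt L (-(PI/2)) (PI/2) = 2 ^ d / 4 ^ n * PI by rewrite /L int_lin.
have le : RInt L (-(PI/2)) (PI/2) <= RInt f (-(PI/2)) (PI/2).
  apply: RInt_le; first lra.
  - apply: ex_RInt_continuous => z _; apply: ex_derive_continuous; rewrite /L; auto_derive; by [].
  - apply: ex_RInt_continuous => z _; apply: ex_derive_continuous; rewrite /f /g; auto_derive; by [].
  move=> x _. rewrite /L /f.
  set t := 1 - cos (2 * (INR n' * x)).
  have t0 : 0 <= t by rewrite /t; have := COS_bound (2 * (INR n' * x)); lra.
  have -> : 4 * g (INR n' * x) = 2 * t by rewrite g_cos /t; field.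
  rewrite Rpow_mult_distr.
  have b := bern t d t0.
  have e : 1 - INR d * cos (2 * INR n' * x) = 1 + INR d * (t - 1).
    rewrite /t Rmult_assoc; ring.
  rewrite e /Rdiv.
  have p2 : 0 < 2 ^ d by apply: pow_lt; lra.
  have pi : 0 < / 4 ^ n by apply: Rinv_0_lt_compat.
  have := Rmult_le_compat_l _ _ _ (Rlt_le _ _ p2) b.
  move=> h. nra.
rewrite eG. apply: Rle_ge.
have h2 : 2 <= 2 ^ d.
  rewrite -(prednK d0) /=. have := pow_R1_Rle 2 d.-1. lra.
apply: (Rle_trans _ (/ PI * (2 ^ d / 4 ^ n * PI))).
  have -> : / PI * (2 ^ d / 4 ^ n * PI) = 2 ^ d / 4 ^ n by field; lra.
  rewrite /Rdiv. apply: Rmult_le_compat_r; [left; apply: Rinv_0_lt_compat|]; lra.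
rewrite -eL. apply: Rmult_le_compat_l => //. left; apply: Rinv_0_lt_compat; lra.
Qed.

Theorem corollary5p2 :
  (forall n : nat, Peano.lt 0 n -> Gt 1 n = 2 / 4 ^ n) /\
  (forall m n : nat, Peano.lt 0 m -> Peano.lt 0 n -> Gt m n >= Gt 1 n).
Proof.
split.
  by move=> n /ltP; apply: part1.
by move=> m n /ltP m0 /ltP n0; apply: part2.
Qed.
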